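(* Let $G$ and $H$ be finite simple connected graphs of order at least $3$, and let $D$ be a minimal dominating set of $G$. The set $D \times V(H)$ is a minimal dominating set of the direct product $G \times H$ if and only if $D$ is an independent set in $G$.
   Context: A set $D$ of vertices is dominating if every vertex is in $D$ or adjacent to a vertex of $D$; it is minimal if no proper subset is dominating. The direct product $G\times H$ has vertex set $V(G)\times V(H)$, with $(g_1,h_1)$ adjacent to $(g_2,h_2)$ iff $g_1g_2\in E(G)$ and $h_1h_2\in E(H)$. *)

(* Defs.v *)
From mathcomp Require Import all_boot.
Set Implicit Arguments. Unset Strict Implicit. Unset Printing Implicit Defensive.

Definition simple_graph (T : finType) (e : rel T) : Prop :=
  symmetric e /\ irreflexive e.

Definition connected_graph (T : finType) (e : rel T) : Prop :=
  forall x y : T, connect e x y.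

Definition dominating (T : finType) (e : rel T) (D : {set T}) : Prop :=
  forall v : T, v \in D \/ exists2 u, u \in D & e v u.

Definition minimal_dominating (T : finType) (e : rel T) (D : {set T}) : Prop :=
  dominating e D /\ forall D' : {set T}, D' \proper D -> ~ dominating e D'.

Definition independent (T : finType) (e : rel T) (D : {set T}) : Prop :=
  forall u v, u \in D -> v \in D -> ~~ e u v.

Definition direct_prod (T1 T2 : finType) (e1 : rel T1) (e2 : rel T2)
  : rel (T1 * T2) :=
  fun x y => e1 x.1 y.1 && e2 x.2 y.2.

(* Main.v *)
Require Import Defs.
From mathcomp Require Import all_boot.

Lemma third_vertex (T : finType) (a b : T) : 3 <= #|T| -> exists z, (z != a) && (z != b).
Proof.
move=> H3; apply/existsP; apply: contraT; rewrite negb_exists => /forallP Hz.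
have Hs : [set: T] \subset [set a; b].
  apply/subsetP => z _; move: (Hz z); rewrite !inE negb_and !negbK => /orP[]->//.
  by rewrite orbT.
move: (subset_leq_card Hs); rewrite cardsT cards2 => Hc.
have : 3 <= (a != b).+1 by apply: leq_trans Hc.
by case: (a != b).
Qed.

Lemma has_nb (T : finType) (e : rel T) : simple_graph e -> connected_graph e ->
  3 <= #|T| -> forall x, exists y, e x y.
Proof.
move=> [Hsym Hirr] Hc H3 x.
apply/existsP; apply: contraT; rewrite negb_exists => /forallP Hn.
have [z /andP[zx _]] := @third_vertex _ x x H3.
have Hcl : closed e [pred w | w == x].
  move=> u w Euw; rewrite !inE.
  case ux: (u == x); case wx: (w == x) => //.
    by move/eqP: ux => ux; subst; move: (Hn w); rewrite Euw.
  by move/eqP: wx => wx; subst; move: (Hn u); rewrite Hsym Euw.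
have := closed_connect Hcl (Hc x z); rewrite !inE eqxx => /esym.
by rewrite (negbTE zx).
Qed.

Lemma nonsupport (T : finType) (e : rel T) : simple_graph e -> connected_graph e ->
  3 <= #|T| -> exists h, forall x, exists y, e x y && (y != h).
Proof.
move=> [Hsym Hirr] Hc H3.
case: (boolP [exists h, [forall x, [exists y, e x y && (y != h)]]]).
  move/existsP=> [h /forallP Hh]; exists h => x; exact/existsP.
rewrite negb_exists => /forallP Hall.
have leaf : forall h, exists l, forall y, e l y -> y = h.
  move=> h; move: (Hall h); rewrite negb_forall => /existsP [l].
  rewrite negb_exists => /forallP Hl; exists l => y Ely.
  by move: (Hl y); rewrite Ely /= negbK => /eqP.
have [z0 _] : exists z0 : T, z0 \in T by apply/card_gt0P; apply: leq_trans H3.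
have [l Hl] := leaf z0.
have [n Eln] := @has_nb _ _ (conj Hsym Hirr) Hc H3 l.
have El0 : e l z0 by rewrite -(Hl _ Eln).
have [l' Hl'] := leaf l.
have [n' Eln'] := @has_nb _ _ (conj Hsym Hirr) Hc H3 l'.
have El'l : e l' l by rewrite -(Hl' _ Eln').
have El'0 : l' = z0 by apply: Hl; rewrite Hsym.
subst l'.
have Hcl : closed e [pred w | (w == z0) || (w == l)].
  have key : forall u w, e u w -> (u == z0) || (u == l) -> (w == z0) || (w == l).
    move=> u w Euw /orP[]/eqP Eu; subst u.
      by move: Euw => /Hl' ->; rewrite eqxx orbT.
    by move: Euw => /Hl ->; rewrite eqxx.
  move=> u w Euw; rewrite !inE.
  apply/idP/idP; first exact: key.
  by apply: key; rewrite Hsym.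
have [z /andP[zx zl]] := @third_vertex _ z0 l H3.
have := closed_connect Hcl (Hc z0 z); rewrite !inE eqxx /= => /esym.
by rewrite (negbTE zx) (negbTE zl).
Qed.

Theorem lemma11 (T1 T2 : finType) (eG : rel T1) (eH : rel T2) (D : {set T1}) :
  simple_graph eG -> connected_graph eG -> 3 <= #|T1| ->
  simple_graph eH -> connected_graph eH -> 3 <= #|T2| ->
  minimal_dominating eG D ->
  (minimal_dominating (direct_prod eG eH) (setX D [set: T2]) <-> independent eG D).
Proof.
move=> [GS GI] Gc G3 Hs Hc H3 [Ddom Dmin].
have Hnb := @has_nb _ _ Hs Hc H3.
split.
- move=> [_ Smin] u v Hu Hv; apply/negP => Euv.
  have [h Hh] := @nonsupport _ _ Hs Hc H3.
  have uhS : (u, h) \in setX D [set: T2] by rewrite in_setX Hu in_setT.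
  apply: (Smin _ (properD1 uhS)).
  move=> [g k].
  case: (boolP ((g, k) \in setX D [set: T2] :\ (u, h))) => Hgk; first by left.
  right.
  case: (boolP (g \in D)) => gD.
    have : (g, k) == (u, h).
      by move: Hgk; rewrite !inE gD /= andbT negbK.
    case/eqP => -> ->.
    have [h1 Eh1] := Hnb h.
    exists (v, h1); last by rewrite /direct_prod /= Euv Eh1.
    rewrite !inE Hv /= andbT; apply/negP => /eqP [vu _].
    by move: Euv; rewrite vu GI.
  have [|[w wD Egw]] := Ddom g; first by rewrite (negbTE gD).
  have [k3 /andP[Ek3 k3h]] := Hh k.
  exists (w, k3); last by rewrite /direct_prod /= Egw Ek3.
  rewrite !inE wD /= andbT; apply/negP => /eqP [_ k3e].
  by rewrite k3e eqxx in k3h.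
- move=> Dind; split.
    move=> [g k].
    case: (boolP (g \in D)) => gD; first by left; rewrite in_setX gD in_setT.
    right.
    have [|[w wD Egw]] := Ddom g; first by rewrite (negbTE gD).
    have [k1 Ek1] := Hnb k.
    exists (w, k1); first by rewrite in_setX wD in_setT.
    by rewrite /direct_prod /= Egw Ek1.
  move=> D' /properP [Hsub [[d h] dhS dhN]] Hdom.
  have dD : d \in D by move: dhS; rewrite in_setX => /andP[].
  have [|[[u h'] uD' /andP[Edu _]]] := Hdom (d, h); first by rewrite (negbTE dhN).
  have uD : u \in D by move: (subsetP Hsub _ uD'); rewrite in_setX => /andP[].
  by move: (Dind d u dD uD); rewrite Edu.
Qed.
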